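(* Let $X\in\mathcal A$, let $\vec\sigma$ be a preference profile and $w_X$ an $X$-truncated weight function for $\vec\sigma$. Then for every pseudometric $d$ consistent with $\vec\sigma$, $$\mathrm{SC}(X,d)\ge \frac12\sum_{Y\in\mathcal A}w_X^+(Y)\,d(X,Y).$$
   Context: Setting: $n$ agents $\mathcal N$, $m$ alternatives $\mathcal A$, each agent $i$ with a strict ranking; $X\succ_iY$ means $i$ ranks $X$ above $Y$, and $Y\succeq_iX$ means $Y\succ_iX$ or $Y=X$. A pseudometric $d$ on $\mathcal N\cup\mathcal A$ is consistent with $\vec\sigma$ if $X\succ_iY\Rightarrow d(i,X)\le d(i,Y)$; $\mathrm{SC}(X,d)=\sum_{i}d(i,X)$. An $X$-truncated weight function is $w:\mathcal N\times\mathcal A\to[0,1]$ such that for every agent $i$: $w(i,Y)=0$ whenever $X\succ_iY$, and $\sum_{Y:\,Y\succeq_iX}w(i,Y)=1$. Write $w^+(Y)=\sum_{i\in\mathcal N}w(i,Y)$. *)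

(* Defs.v *)
From mathcomp Require Import all_boot all_order all_algebra.
Set Implicit Arguments. Unset Strict Implicit. Unset Printing Implicit Defensive.
Import Order.TTheory GRing.Theory Num.Theory.
Local Open Scope ring_scope.

(* Agents [Ag] and alternatives [Al] are finite types; a profile gives, for
   each agent i, a strict relation [sigma i X Y] meaning "X ≻_i Y". *)

Definition strict_ranking (Al : finType) (r : rel Al) : Prop :=
  [/\ irreflexive r, transitive r & forall X Y, X != Y -> r X Y || r Y X].

Definition profile (Ag Al : finType) (sigma : Ag -> rel Al) : Prop :=
  forall i, strict_ranking (sigma i).

Definition pt (Ag Al : finType) := (Ag + Al)%type.

Definition pseudometric (R : realFieldType) (T : Type) (d : T -> T -> R) : Prop :=
  [/\ forall x, d x x = 0,
      forall x y, 0 <= d x y,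
      forall x y, d x y = d y x &
      forall x y z, d x z <= d x y + d y z].

Definition consistent (R : realFieldType) (Ag Al : finType)
  (sigma : Ag -> rel Al) (d : pt Ag Al -> pt Ag Al -> R) : Prop :=
  forall i X Y, sigma i X Y -> d (inl i) (inr X) <= d (inl i) (inr Y).

Definition SC (R : realFieldType) (Ag Al : finType)
  (d : pt Ag Al -> pt Ag Al -> R) (X : Al) : R :=
  \sum_(i : Ag) d (inl i) (inr X).

Definition truncated_weight (R : realFieldType) (Ag Al : finType)
  (sigma : Ag -> rel Al) (X : Al) (w : Ag -> Al -> R) : Prop :=
  [/\ forall i Y, 0 <= w i Y <= 1,
      forall i Y, sigma i X Y -> w i Y = 0 &
      forall i, \sum_(Y : Al | sigma i Y X || (Y == X)) w i Y = 1].

Definition wplus (R : realFieldType) (Ag Al : finType) (w : Ag -> Al -> R) (Y : Al) : R :=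
  \sum_(i : Ag) w i Y.

(* Main.v *)
Require Import Defs.
From mathcomp Require Import all_boot all_order all_algebra.
Import Order.TTheory GRing.Theory Num.Theory.
Local Open Scope ring_scope.

Theorem mainTheorem5 (R : realFieldType) (Ag Al : finType)
  (sigma : Ag -> rel Al) (X : Al) (w : Ag -> Al -> R)
  (d : pt Ag Al -> pt Ag Al -> R) :
  profile sigma ->
  truncated_weight sigma X w ->
  pseudometric d ->
  consistent sigma d ->
  SC d X >= 2^-1 * \sum_(Y : Al) wplus w Y * d (inr X) (inr Y).
Proof.
move=> Hp [Hw0 Hw1 Hws] [d0 dge dsym dtri] Hc.
rewrite /SC /wplus.
have key : forall i, \sum_(Y : Al) w i Y * d (inr X) (inr Y)
    <= 2 * d (inl i) (inr X).
  move=> i.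
  have -> : 2 * d (inl i) (inr X) =
     \sum_(Y : Al) (if sigma i Y X || (Y == X) then w i Y * (2 * d (inl i) (inr X)) else 0).
    by rewrite -big_mkcond /= -big_distrl /= Hws mul1r.
  apply: ler_sum => Y _.
  case: ifP => HP.
    have le1 : d (inl i) (inr Y) <= d (inl i) (inr X).
      case/orP: HP => [/Hc //|/eqP ->]; exact: lexx.
    have tri : d (inr X) (inr Y) <= 2 * d (inl i) (inr X).
      apply: le_trans (dtri _ (inl i) _) _.
      rewrite dsym mulr2n mulrDl mul1r; exact: lerD.
    apply: ler_wpM2l => //; by case/andP: (Hw0 i Y).
  have Hs : sigma i X Y.
    case: (Hp i) => _ _ Htot.
    have Hne : X != Y by apply/eqP => E; move: HP; rewrite E eqxx orbT.
    case/orP: (Htot X Y Hne) => // HYX; by move: HP; rewrite HYX.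
  by rewrite Hw1 // mul0r.
under eq_bigr => Y _ do rewrite mulr_suml.
rewrite exchange_big /= mulr_sumr.
apply: ler_sum => i _.
rewrite -(ler_pM2l (_ : 0 < 2 :> R)) // mulrA mulfV ?pnatr_eq0 // mul1r.
exact: key.
Qed.
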